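(* Let $Q=\Diamond abcd$ be a convex quadrilateral with vertices $a,b,c,d$ in clockwise order, such that the diagonal $\overline{ac}$ is horizontal, $|ac|=1$, and $1$ is the diameter of $Q$. Let the smallest axis-parallel rectangle containing $Q$ have horizontal side length $1$ and vertical side length $W$ with $0<W\le 1$, with $a$ on its left side, $b$ on its top side, $c$ on its right side and $d$ on its bottom side. Let $r=\frac14\sqrt{1+4W^2}$ (the radius of the two congruent disks circumscribing the two halves of this rectangle cut by a vertical line through its center). Then $r<1.84\, r_{opt}(Q)$.
   Context: For a compact set $X\subset\mathbb{R}^2$, $r_{opt}(X)$ denotes the minimum $r$ such that two closed disks of radius $r$ have union containing $X$. *)

(* Defs.v *)
From HB Require Import structures.
From mathcomp Require Import all_boot all_order all_algebra.
From mathcomp Require Import classical_sets reals.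
Set Implicit Arguments. Unset Strict Implicit. Unset Printing Implicit Defensive.
Import Order.TTheory GRing.Theory Num.Theory.
Local Open Scope ring_scope.
Local Open Scope classical_set_scope.

Section Defs.
Variable R : realType.
Notation pt := (R * R)%type.

Definition dist (p q : pt) : R :=
  Num.sqrt ((p.1 - q.1) ^+ 2 + (p.2 - q.2) ^+ 2).

Definition cdisk (c : pt) (r : R) : set pt := [set p | dist p c <= r].

Definition two_disk_cover (X : set pt) (r : R) : Prop :=
  exists c1 c2 : pt, X `<=` cdisk c1 r `|` cdisk c2 r.

Definition r_opt (X : set pt) : R := inf [set r | two_disk_cover X r].

(* signed area (cross product) of (b - a, c - a); negative = clockwise turn *)
Definition orient (a b c : pt) : R :=
  (b.1 - a.1) * (c.2 - a.2) - (b.2 - a.2) * (c.1 - a.1).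

Definition convex_quad_cw (a b c d : pt) : Prop :=
  [/\ orient a b c < 0, orient b c d < 0, orient c d a < 0 & orient d a b < 0].

Definition quad (a b c d : pt) : set pt :=
  [set p | exists la lb lc ld : R,
     [/\ [/\ 0 <= la, 0 <= lb, 0 <= lc & 0 <= ld], la + lb + lc + ld = 1 &
         p = (la * a.1 + lb * b.1 + lc * c.1 + ld * d.1,
              la * a.2 + lb * b.2 + lc * c.2 + ld * d.2)]].

Definition diam (X : set pt) : R :=
  sup [set e | exists p q, [/\ X p, X q & e = dist p q]].

Definition bb_xmin (X : set pt) : R := inf [set p.1 | p in X].
Definition bb_xmax (X : set pt) : R := sup [set p.1 | p in X].
Definition bb_ymin (X : set pt) : R := inf [set p.2 | p in X].
Definition bb_ymax (X : set pt) : R := sup [set p.2 | p in X].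

End Defs.

(* Main.v *)
Require Import Defs.
From HB Require Import structures.
From mathcomp Require Import all_boot all_order all_algebra.
From mathcomp Require Import classical_sets reals.
From mathcomp Require Import ring lra.
Import Order.TTheory GRing.Theory Num.Theory.
Local Open Scope ring_scope.
Local Open Scope classical_set_scope.

Lemma sqrt_le_sq {R : realType} (s t : R) : 0 <= s -> Num.sqrt s <= t -> s <= t ^+ 2.
Proof.
move=> s0 h; have q0 := sqrtr_ge0 s; have e := sqr_sqrtr s0.
rewrite -e; nra.
Qed.

Lemma le_sqrt_of {R : realType} (s t : R) : 0 <= t -> s <= t ^+ 2 -> Num.sqrt s <= t.
Proof.
move=> t0 h; have -> : t = Num.sqrt (t ^+ 2) by rewrite sqrtr_sqr ger0_norm.
by rewrite ler_sqrt // sqr_ge0.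
Qed.

Lemma dist2 {R : realType} (p z : R * R) r : dist p z <= r ->
  (p.1 - z.1) ^+ 2 + (p.2 - z.2) ^+ 2 <= r ^+ 2.
Proof.
move=> h; apply: sqrt_le_sq (h).
by rewrite addr_ge0 // sqr_ge0.
Qed.
Arguments dist2 {R p z r}.

Lemma dist_ge0 {R : realType} (p z : R * R) : 0 <= dist p z.
Proof. exact: sqrtr_ge0. Qed.

Lemma pair_bound {R : realType} (p q z : R * R) r : dist p z <= r -> dist q z <= r ->
  (p.1 - q.1) ^+ 2 + (p.2 - q.2) ^+ 2 <= 4 * r ^+ 2.
Proof.
move=> hp hq; have := dist2 hp; have := dist2 hq.
have := sqr_ge0 (p.1 + q.1 - 2 * z.1); have := sqr_ge0 (p.2 + q.2 - 2 * z.2).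
nra.
Qed.
Arguments pair_bound {R p q z r}.

Lemma comb_norm {R : realType} (la lb lc ld x1 x2 x3 x4 : R) :
  0 <= la -> 0 <= lb -> 0 <= lc -> 0 <= ld -> la + lb + lc + ld = 1 ->
  `|la * x1 + lb * x2 + lc * x3 + ld * x4| <= `|x1| + `|x2| + `|x3| + `|x4|.
Proof.
move=> h1 h2 h3 h4 hs.
have e1 : `|la * x1| <= `|x1| by rewrite normrM ger0_norm //; have := normr_ge0 x1; nra.
have e2 : `|lb * x2| <= `|x2| by rewrite normrM ger0_norm //; have := normr_ge0 x2; nra.
have e3 : `|lc * x3| <= `|x3| by rewrite normrM ger0_norm //; have := normr_ge0 x3; nra.
have e4 : `|ld * x4| <= `|x4| by rewrite normrM ger0_norm //; have := normr_ge0 x4; nra.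
have := ler_normD (la * x1 + lb * x2 + lc * x3) (ld * x4).
have := ler_normD (la * x1 + lb * x2) (lc * x3).
have := ler_normD (la * x1) (lb * x2).
lra.
Qed.

Lemma quadP {R : realType} (a b c d p : R * R) la lb lc ld :
  0 <= la -> 0 <= lb -> 0 <= lc -> 0 <= ld -> la + lb + lc + ld = 1 ->
  p.1 = la * a.1 + lb * b.1 + lc * c.1 + ld * d.1 ->
  p.2 = la * a.2 + lb * b.2 + lc * c.2 + ld * d.2 -> quad a b c d p.
Proof.
move=> h1 h2 h3 h4 hs e1 e2; exists la, lb, lc, ld; split => //.
by case: p e1 e2 => /= ? ? -> ->.
Qed.

Lemma quad_bound {R : realType} (a b c d p : R * R) : quad a b c d p ->
  `|p.1| <= `|a.1| + `|b.1| + `|c.1| + `|d.1| /\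
  `|p.2| <= `|a.2| + `|b.2| + `|c.2| + `|d.2|.
Proof.
case=> la [lb [lc [ld [[h1 h2 h3 h4] hs ->]]]] /=.
by split; apply: comb_norm.
Qed.

Lemma normb {R : realType} (x : R) : - `|x| <= x /\ x <= `|x|.
Proof. by split; [have := ler_norm (- x); rewrite normrN; lra | exact: ler_norm]. Qed.
Lemma LI11 {R : realFieldType} (u v h1 h2 : R) : 0 <= h1 -> 0 <= h2 -> 76/100 <= h1 + h2 -> h1 + h2 <= 1 -> 0 <= u -> u <= 1 -> 0 <= v -> v <= 1 -> u - v <= 65/100 -> v - u <= 65/100 -> (u-v)^+2 + (h1+h2)^+2 <= 1 ->
 0 <= (55/100) * ((0-((1+v)/2))^+2+(0-(-h2/2))^+2) + (1-55/100) * ((u-((1+v)/2))^+2+(h1-(-h2/2))^+2) - (1 + 4*(h1+h2)^+2) * (50/183)^+2.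
Proof.
move=> H0 H1 H2 H3 H4 H5 H6 H7 H8 H9 Q0.
have G0 : 0 <= (h1) by lra.
have G1 : 0 <= (h2) by lra.
have G2 : 0 <= (h1+h2-76/100) by lra.
have G3 : 0 <= (1-(h1+h2)) by lra.
have G4 : 0 <= (u) by lra.
have G5 : 0 <= (1-u) by lra.
have G6 : 0 <= (v) by lra.
have G8 : 0 <= (65/100-(u-v)) by lra.
have S0 : 0 <= ((1/1)+(-163/100)*u+(41/50)*v+(-41/100)*h1+(-8/25)*h2)^+2 := sqr_ge0 _.
have S1 : 0 <= ((1/1)*u+(-12/25)*v+(-57/100)*h1+(-47/100)*h2)^+2 := sqr_ge0 _.
have S2 : 0 <= ((1/1)*v+(-37/100)*h1+(1/20)*h2)^+2 := sqr_ge0 _.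
have S3 : 0 <= ((1/1)*h1+(-19/100)*h2)^+2 := sqr_ge0 _.
have P0_0 := mulr_ge0 G0 G0.
have P0_3 := mulr_ge0 G0 G3.
have P0_6 := mulr_ge0 G0 G6.
have P0_8 := mulr_ge0 G0 G8.
have P1_6 := mulr_ge0 G1 G6.
have P1_8 := mulr_ge0 G1 G8.
have P2_3 := mulr_ge0 G2 G3.
have P3_5 := mulr_ge0 G3 G5.
have P3_6 := mulr_ge0 G3 G6.
have P3_8 := mulr_ge0 G3 G8.
have P4_5 := mulr_ge0 G4 G5.
lra.
Qed.

Lemma LI12 {R : realFieldType} (u v h1 h2 : R) : 0 <= h1 -> 0 <= h2 -> 76/100 <= h1 + h2 -> h1 + h2 <= 1 -> 0 <= u -> u <= 1 -> 0 <= v -> v <= 1 -> u - v <= 65/100 -> v - u <= 65/100 -> (u-v)^+2 + (h1+h2)^+2 <= 1 ->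
 0 <= (1/2) * ((0-((1+v)/2))^+2+(0-(-h2/2))^+2) + (1-1/2) * ((1-(v/2))^+2+(0-(-h2/2))^+2) - (1 + 4*(h1+h2)^+2) * (50/183)^+2.
Proof.
move=> H0 H1 H2 H3 H4 H5 H6 H7 H8 H9 Q0.
have G0 : 0 <= (h1) by lra.
have G1 : 0 <= (h2) by lra.
have G2 : 0 <= (h1+h2-76/100) by lra.
have G3 : 0 <= (1-(h1+h2)) by lra.
have G6 : 0 <= (v) by lra.
have G7 : 0 <= (1-v) by lra.
have S2 : 0 <= ((1/1)*v+(-49/100)*h1+(-29/50)*h2)^+2 := sqr_ge0 _.
have S3 : 0 <= ((1/1)*h1+(-41/20)*h2)^+2 := sqr_ge0 _.
have S4 : 0 <= ((1/1)*h2)^+2 := sqr_ge0 _.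
have P0_1 := mulr_ge0 G0 G1.
have P0_3 := mulr_ge0 G0 G3.
have P0_7 := mulr_ge0 G0 G7.
have P1_3 := mulr_ge0 G1 G3.
have P1_7 := mulr_ge0 G1 G7.
have P2_2 := mulr_ge0 G2 G2.
have P2_6 := mulr_ge0 G2 G6.
lra.
Qed.

Lemma LI21 {R : realFieldType} (u v h1 h2 : R) : 0 <= h1 -> 0 <= h2 -> 76/100 <= h1 + h2 -> h1 + h2 <= 1 -> 0 <= u -> u <= 1 -> 0 <= v -> v <= 1 -> u - v <= 65/100 -> v - u <= 65/100 -> (u-v)^+2 + (h1+h2)^+2 <= 1 ->
 0 <= (7/10) * ((u-(v/2))^+2+(h1-(-h2/2))^+2) + (1-7/10) * ((1-v)^+2+(0-(-h2))^+2) - (1 + 4*(h1+h2)^+2) * (50/183)^+2.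
Proof.
move=> H0 H1 H2 H3 H4 H5 H6 H7 H8 H9 Q0.
have G0 : 0 <= (h1) by lra.
have G1 : 0 <= (h2) by lra.
have G2 : 0 <= (h1+h2-76/100) by lra.
have G3 : 0 <= (1-(h1+h2)) by lra.
have G4 : 0 <= (u) by lra.
have G5 : 0 <= (1-u) by lra.
have G7 : 0 <= (1-v) by lra.
have G9 : 0 <= (65/100+(u-v)) by lra.
have S0 : 0 <= ((1/1)+(1/25)*u+(-69/100)*v+(-12/25)*h1+(-1/2)*h2)^+2 := sqr_ge0 _.
have S1 : 0 <= ((1/1)*u+(-23/50)*v+(-3/50)*h1+(-1/20)*h2)^+2 := sqr_ge0 _.
have S3 : 0 <= ((1/1)*h1+(-19/50)*h2)^+2 := sqr_ge0 _.
have P0_0 := mulr_ge0 G0 G0.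
have P0_2 := mulr_ge0 G0 G2.
have P0_4 := mulr_ge0 G0 G4.
have P0_7 := mulr_ge0 G0 G7.
have P0_9 := mulr_ge0 G0 G9.
have P1_2 := mulr_ge0 G1 G2.
have P1_5 := mulr_ge0 G1 G5.
have P1_7 := mulr_ge0 G1 G7.
have P2_3 := mulr_ge0 G2 G3.
have P2_4 := mulr_ge0 G2 G4.
have P2_7 := mulr_ge0 G2 G7.
have P4_5 := mulr_ge0 G4 G5.
lra.
Qed.

Lemma LI22 {R : realFieldType} (u v h1 h2 : R) : 0 <= h1 -> 0 <= h2 -> 76/100 <= h1 + h2 -> h1 + h2 <= 1 -> 0 <= u -> u <= 1 -> 0 <= v -> v <= 1 -> u - v <= 65/100 -> v - u <= 65/100 -> (u-v)^+2 + (h1+h2)^+2 <= 1 ->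
 0 <= (3/10) * ((0-u)^+2+(0-h1)^+2) + (1-3/10) * ((1-(v/2))^+2+(0-(-h2/2))^+2) - (1 + 4*(h1+h2)^+2) * (50/183)^+2.
Proof.
move=> H0 H1 H2 H3 H4 H5 H6 H7 H8 H9 Q0.
have G0 : 0 <= (h1) by lra.
have G1 : 0 <= (h2) by lra.
have G3 : 0 <= (1-(h1+h2)) by lra.
have G4 : 0 <= (u) by lra.
have G5 : 0 <= (1-u) by lra.
have G7 : 0 <= (1-v) by lra.
have G9 : 0 <= (65/100+(u-v)) by lra.
have S0 : 0 <= ((1/1)+(-9/50)*u+(-71/100)*v+(-33/100)*h1+(-29/100)*h2)^+2 := sqr_ge0 _.
have S1 : 0 <= ((1/1)*u+(-21/50)*v+(-7/100)*h1+(-3/50)*h2)^+2 := sqr_ge0 _.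
have S3 : 0 <= ((1/1)*h1+(-61/100)*h2)^+2 := sqr_ge0 _.
have P0_3 := mulr_ge0 G0 G3.
have P0_5 := mulr_ge0 G0 G5.
have P0_7 := mulr_ge0 G0 G7.
have P0_9 := mulr_ge0 G0 G9.
have P1_3 := mulr_ge0 G1 G3.
have P1_4 := mulr_ge0 G1 G4.
have P1_7 := mulr_ge0 G1 G7.
have P3_3 := mulr_ge0 G3 G3.
have P4_9 := mulr_ge0 G4 G9.
have P5_7 := mulr_ge0 G5 G7.
have P7_7 := mulr_ge0 G7 G7.
lra.
Qed.

Lemma LII11 {R : realFieldType} (u v h1 h2 : R) : 0 <= h1 -> 0 <= h2 -> 76/100 <= h1 + h2 -> h1 + h2 <= 1 -> 0 <= u -> u <= 1 -> 0 <= v -> v <= 1 -> u - v <= 65/100 -> v - u <= 65/100 -> (u-v)^+2 + (h1+h2)^+2 <= 1 ->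
 0 <= (3/4) * ((0-((1+v)/2))^+2+(0-(-h2/2))^+2) + (1-3/4) * ((1-u)^+2+(0-h1)^+2) - (1 + 4*(h1+h2)^+2) * (50/183)^+2.
Proof.
move=> H0 H1 H2 H3 H4 H5 H6 H7 H8 H9 Q0.
have G0 : 0 <= (h1) by lra.
have G1 : 0 <= (h2) by lra.
have G3 : 0 <= (1-(h1+h2)) by lra.
have G4 : 0 <= (u) by lra.
have G5 : 0 <= (1-u) by lra.
have G6 : 0 <= (v) by lra.
have G8 : 0 <= (65/100-(u-v)) by lra.
have S0 : 0 <= ((1/1)+(-67/50)*u+(27/50)*v+(-19/50)*h1+(-37/100)*h2)^+2 := sqr_ge0 _.
have S1 : 0 <= ((1/1)*u+(-31/100)*v+(-59/100)*h1+(-57/100)*h2)^+2 := sqr_ge0 _.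
have S3 : 0 <= ((1/1)*h1+(-19/25)*h2)^+2 := sqr_ge0 _.
have P0_0 := mulr_ge0 G0 G0.
have P0_3 := mulr_ge0 G0 G3.
have P0_4 := mulr_ge0 G0 G4.
have P0_6 := mulr_ge0 G0 G6.
have P1_3 := mulr_ge0 G1 G3.
have P1_6 := mulr_ge0 G1 G6.
have P3_3 := mulr_ge0 G3 G3.
have P3_6 := mulr_ge0 G3 G6.
have P4_6 := mulr_ge0 G4 G6.
have P5_8 := mulr_ge0 G5 G8.
have P6_6 := mulr_ge0 G6 G6.
lra.
Qed.

Lemma LII21 {R : realFieldType} (u v h1 h2 : R) : 0 <= h1 -> 0 <= h2 -> 76/100 <= h1 + h2 -> h1 + h2 <= 1 -> 0 <= u -> u <= 1 -> 0 <= v -> v <= 1 -> u - v <= 65/100 -> v - u <= 65/100 -> (u-v)^+2 + (h1+h2)^+2 <= 1 ->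
 0 <= (3/10) * ((0-v)^+2+(0-(-h2))^+2) + (1-3/10) * ((u-((1+v)/2))^+2+(h1-(-h2/2))^+2) - (1 + 4*(h1+h2)^+2) * (50/183)^+2.
Proof.
move=> H0 H1 H2 H3 H4 H5 H6 H7 H8 H9 Q0.
have G0 : 0 <= (h1) by lra.
have G1 : 0 <= (h2) by lra.
have G2 : 0 <= (h1+h2-76/100) by lra.
have G3 : 0 <= (1-(h1+h2)) by lra.
have G5 : 0 <= (1-u) by lra.
have G6 : 0 <= (v) by lra.
have S0 : 0 <= ((1/1)+(-5/4)*u+(41/50)*v+(-47/100)*h1+(-53/100)*h2)^+2 := sqr_ge0 _.
have S1 : 0 <= ((1/1)*u+(-7/50)*v+(-59/100)*h1+(-7/10)*h2)^+2 := sqr_ge0 _.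
have S2 : 0 <= ((1/1)*v+(-7/50)*h1+(-3/50)*h2)^+2 := sqr_ge0 _.
have S3 : 0 <= ((1/1)*h1+(-37/100)*h2)^+2 := sqr_ge0 _.
have S4 : 0 <= ((1/1)*h2)^+2 := sqr_ge0 _.
have P0_0 := mulr_ge0 G0 G0.
have P0_2 := mulr_ge0 G0 G2.
have P0_5 := mulr_ge0 G0 G5.
have P0_6 := mulr_ge0 G0 G6.
have P1_2 := mulr_ge0 G1 G2.
have P1_5 := mulr_ge0 G1 G5.
have P1_6 := mulr_ge0 G1 G6.
have P2_3 := mulr_ge0 G2 G3.
have P2_5 := mulr_ge0 G2 G5.
have P2_6 := mulr_ge0 G2 G6.
lra.
Qed.

Lemma LII22 {R : realFieldType} (u v h1 h2 : R) : 0 <= h1 -> 0 <= h2 -> 76/100 <= h1 + h2 -> h1 + h2 <= 1 -> 0 <= u -> u <= 1 -> 0 <= v -> v <= 1 -> u - v <= 65/100 -> v - u <= 65/100 -> (u-v)^+2 + (h1+h2)^+2 <= 1 ->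
 0 <= (55/100) * ((1-(v/2))^+2+(0-(-h2/2))^+2) + (1-55/100) * ((u-(v/2))^+2+(h1-(-h2/2))^+2) - (1 + 4*(h1+h2)^+2) * (50/183)^+2.
Proof.
move=> H0 H1 H2 H3 H4 H5 H6 H7 H8 H9 Q0.
have G0 : 0 <= (h1) by lra.
have G1 : 0 <= (h2) by lra.
have G2 : 0 <= (h1+h2-76/100) by lra.
have G3 : 0 <= (1-(h1+h2)) by lra.
have G4 : 0 <= (u) by lra.
have G7 : 0 <= (1-v) by lra.
have G9 : 0 <= (65/100+(u-v)) by lra.
have S0 : 0 <= ((1/1)+(-13/50)*u+(-57/100)*v+(-13/20)*h1+(-13/50)*h2)^+2 := sqr_ge0 _.
have S1 : 0 <= ((1/1)*u+(-27/50)*v+(-3/50)*h1+(-1/50)*h2)^+2 := sqr_ge0 _.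
have S2 : 0 <= ((1/1)*v+(-53/50)*h1+(-111/100)*h2)^+2 := sqr_ge0 _.
have S3 : 0 <= ((1/1)*h1+(-1/5)*h2)^+2 := sqr_ge0 _.
have P0_0 := mulr_ge0 G0 G0.
have P0_3 := mulr_ge0 G0 G3.
have P0_7 := mulr_ge0 G0 G7.
have P0_9 := mulr_ge0 G0 G9.
have P1_3 := mulr_ge0 G1 G3.
have P1_7 := mulr_ge0 G1 G7.
have P1_9 := mulr_ge0 G1 G9.
have P2_3 := mulr_ge0 G2 G3.
have P3_4 := mulr_ge0 G3 G4.
have P3_7 := mulr_ge0 G3 G7.
have P4_7 := mulr_ge0 G4 G7.
lra.
Qed.


Lemma sq_box {R : realType} (x1 x2 y1 y2 M N : R) : `|x1| <= M -> `|x2| <= M -> `|y1| <= N -> `|y2| <= N ->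
  (x1 - x2) ^+ 2 + (y1 - y2) ^+ 2 <= (2 * (M + N)) ^+ 2.
Proof.
move=> h1 h2 h3 h4.
have [a1 b1] := normb x1; have [a2 b2] := normb x2; have [a3 b3] := normb y1; have [a4 b4] := normb y2.
have e1 : 0 <= 2 * M - (x1 - x2) by lra.
have e2 : 0 <= 2 * M + (x1 - x2) by lra.
have e3 : 0 <= 2 * N - (y1 - y2) by lra.
have e4 : 0 <= 2 * N + (y1 - y2) by lra.
have e5 : 0 <= M by have := normr_ge0 x1; lra.
have e6 : 0 <= N by have := normr_ge0 y1; lra.
have := mulr_ge0 e1 e2; have := mulr_ge0 e3 e4; have := mulr_ge0 e5 e6.
lra.
Qed.

Lemma sq_box0 {R : realType} (x1 y1 M N : R) : `|x1| <= M -> `|y1| <= N ->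
  (x1 - 0) ^+ 2 + (y1 - 0) ^+ 2 <= (M + N) ^+ 2.
Proof.
move=> h1 h3.
have [a1 b1] := normb x1; have [a3 b3] := normb y1.
have e1 : 0 <= M - x1 by lra.
have e2 : 0 <= M + x1 by lra.
have e3 : 0 <= N - y1 by lra.
have e4 : 0 <= N + y1 by lra.
have e5 : 0 <= M by have := normr_ge0 x1; lra.
have e6 : 0 <= N by have := normr_ge0 y1; lra.
have := mulr_ge0 e1 e2; have := mulr_ge0 e3 e4; have := mulr_ge0 e5 e6.
lra.
Qed.

Lemma fin_small {R : realType} (w r : R) : 0 < w -> w <= 76/100 -> 1/4 <= 4 * r ^+ 2 ->
  (1 + 4 * w ^+ 2) * (50/183) ^+ 2 <= 4 * r ^+ 2.
Proof. move=> h1 h2 h3; nra. Qed.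

Lemma fin_ac {R : realType} (w r : R) : 0 < w -> w <= 1 -> 1 <= 4 * r ^+ 2 ->
  (1 + 4 * w ^+ 2) * (50/183) ^+ 2 <= 4 * r ^+ 2.
Proof. move=> h1 h2 h3; nra. Qed.

Lemma fin_bd {R : realType} (x w r : R) : 76/100 < w -> w <= 1 -> x ^+ 2 + w ^+ 2 <= 4 * r ^+ 2 ->
  (1 + 4 * w ^+ 2) * (50/183) ^+ 2 <= 4 * r ^+ 2.
Proof. move=> h1 h2 h3; have := sqr_ge0 x; nra. Qed.

Lemma CI11 {R : realType} (a1 a2 b1 b2 d1 d2 r : R) : 0 <= b2 - a2 -> 0 <= a2 - d2 -> 76/100 <= (b2 - a2) + (a2 - d2) -> (b2 - a2) + (a2 - d2) <= 1 -> 0 <= b1 - a1 -> b1 - a1 <= 1 -> 0 <= d1 - a1 -> d1 - a1 <= 1 -> (b1 - a1) - (d1 - a1) <= 65/100 -> (d1 - a1) - (b1 - a1) <= 65/100 -> ((b1 - a1) - (d1 - a1)) ^+ 2 + ((b2 - a2) + (a2 - d2)) ^+ 2 <= 1 ->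
  (((a1, a2).1 - ((a1 + 1 + d1) / 2, (a2 + d2) / 2).1) ^+ 2 + ((a1, a2).2 - ((a1 + 1 + d1) / 2, (a2 + d2) / 2).2) ^+ 2) <= 4 * r ^+ 2 -> (((b1, b2).1 - ((a1 + 1 + d1) / 2, (a2 + d2) / 2).1) ^+ 2 + ((b1, b2).2 - ((a1 + 1 + d1) / 2, (a2 + d2) / 2).2) ^+ 2) <= 4 * r ^+ 2 ->
  (1 + 4 * (b2 - d2) ^+ 2) * (50/183) ^+ 2 <= 4 * r ^+ 2.
Proof.
move=> G0 G1 G2 G3 G4 G5 G6 G7 G8 G9 G10 h1 h2; rewrite /= in h1 h2.
have L := LI11 (b1 - a1) (d1 - a1) (b2 - a2) (a2 - d2) G0 G1 G2 G3 G4 G5 G6 G7 G8 G9 G10; lra.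
Qed.

Lemma CI12 {R : realType} (a1 a2 b1 b2 d1 d2 r : R) : 0 <= b2 - a2 -> 0 <= a2 - d2 -> 76/100 <= (b2 - a2) + (a2 - d2) -> (b2 - a2) + (a2 - d2) <= 1 -> 0 <= b1 - a1 -> b1 - a1 <= 1 -> 0 <= d1 - a1 -> d1 - a1 <= 1 -> (b1 - a1) - (d1 - a1) <= 65/100 -> (d1 - a1) - (b1 - a1) <= 65/100 -> ((b1 - a1) - (d1 - a1)) ^+ 2 + ((b2 - a2) + (a2 - d2)) ^+ 2 <= 1 ->
  (((a1, a2).1 - ((a1 + 1 + d1) / 2, (a2 + d2) / 2).1) ^+ 2 + ((a1, a2).2 - ((a1 + 1 + d1) / 2, (a2 + d2) / 2).2) ^+ 2) <= 4 * r ^+ 2 -> (((a1 + 1, a2).1 - ((a1 + d1) / 2, (a2 + d2) / 2).1) ^+ 2 + ((a1 + 1, a2).2 - ((a1 + d1) / 2, (a2 + d2) / 2).2) ^+ 2) <= 4 * r ^+ 2 ->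
  (1 + 4 * (b2 - d2) ^+ 2) * (50/183) ^+ 2 <= 4 * r ^+ 2.
Proof.
move=> G0 G1 G2 G3 G4 G5 G6 G7 G8 G9 G10 h1 h2; rewrite /= in h1 h2.
have L := LI12 (b1 - a1) (d1 - a1) (b2 - a2) (a2 - d2) G0 G1 G2 G3 G4 G5 G6 G7 G8 G9 G10; lra.
Qed.

Lemma CI21 {R : realType} (a1 a2 b1 b2 d1 d2 r : R) : 0 <= b2 - a2 -> 0 <= a2 - d2 -> 76/100 <= (b2 - a2) + (a2 - d2) -> (b2 - a2) + (a2 - d2) <= 1 -> 0 <= b1 - a1 -> b1 - a1 <= 1 -> 0 <= d1 - a1 -> d1 - a1 <= 1 -> (b1 - a1) - (d1 - a1) <= 65/100 -> (d1 - a1) - (b1 - a1) <= 65/100 -> ((b1 - a1) - (d1 - a1)) ^+ 2 + ((b2 - a2) + (a2 - d2)) ^+ 2 <= 1 ->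
  (((b1, b2).1 - ((a1 + d1) / 2, (a2 + d2) / 2).1) ^+ 2 + ((b1, b2).2 - ((a1 + d1) / 2, (a2 + d2) / 2).2) ^+ 2) <= 4 * r ^+ 2 -> (((a1 + 1, a2).1 - (d1, d2).1) ^+ 2 + ((a1 + 1, a2).2 - (d1, d2).2) ^+ 2) <= 4 * r ^+ 2 ->
  (1 + 4 * (b2 - d2) ^+ 2) * (50/183) ^+ 2 <= 4 * r ^+ 2.
Proof.
move=> G0 G1 G2 G3 G4 G5 G6 G7 G8 G9 G10 h1 h2; rewrite /= in h1 h2.
have L := LI21 (b1 - a1) (d1 - a1) (b2 - a2) (a2 - d2) G0 G1 G2 G3 G4 G5 G6 G7 G8 G9 G10; lra.
Qed.

Lemma CI22 {R : realType} (a1 a2 b1 b2 d1 d2 r : R) : 0 <= b2 - a2 -> 0 <= a2 - d2 -> 76/100 <= (b2 - a2) + (a2 - d2) -> (b2 - a2) + (a2 - d2) <= 1 -> 0 <= b1 - a1 -> b1 - a1 <= 1 -> 0 <= d1 - a1 -> d1 - a1 <= 1 -> (b1 - a1) - (d1 - a1) <= 65/100 -> (d1 - a1) - (b1 - a1) <= 65/100 -> ((b1 - a1) - (d1 - a1)) ^+ 2 + ((b2 - a2) + (a2 - d2)) ^+ 2 <= 1 ->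
  (((a1, a2).1 - (b1, b2).1) ^+ 2 + ((a1, a2).2 - (b1, b2).2) ^+ 2) <= 4 * r ^+ 2 -> (((a1 + 1, a2).1 - ((a1 + d1) / 2, (a2 + d2) / 2).1) ^+ 2 + ((a1 + 1, a2).2 - ((a1 + d1) / 2, (a2 + d2) / 2).2) ^+ 2) <= 4 * r ^+ 2 ->
  (1 + 4 * (b2 - d2) ^+ 2) * (50/183) ^+ 2 <= 4 * r ^+ 2.
Proof.
move=> G0 G1 G2 G3 G4 G5 G6 G7 G8 G9 G10 h1 h2; rewrite /= in h1 h2.
have L := LI22 (b1 - a1) (d1 - a1) (b2 - a2) (a2 - d2) G0 G1 G2 G3 G4 G5 G6 G7 G8 G9 G10; lra.
Qed.

Lemma CII11 {R : realType} (a1 a2 b1 b2 d1 d2 r : R) : 0 <= b2 - a2 -> 0 <= a2 - d2 -> 76/100 <= (b2 - a2) + (a2 - d2) -> (b2 - a2) + (a2 - d2) <= 1 -> 0 <= b1 - a1 -> b1 - a1 <= 1 -> 0 <= d1 - a1 -> d1 - a1 <= 1 -> (b1 - a1) - (d1 - a1) <= 65/100 -> (d1 - a1) - (b1 - a1) <= 65/100 -> ((b1 - a1) - (d1 - a1)) ^+ 2 + ((b2 - a2) + (a2 - d2)) ^+ 2 <= 1 ->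
  (((a1, a2).1 - ((a1 + 1 + d1) / 2, (a2 + d2) / 2).1) ^+ 2 + ((a1, a2).2 - ((a1 + 1 + d1) / 2, (a2 + d2) / 2).2) ^+ 2) <= 4 * r ^+ 2 -> (((a1 + 1, a2).1 - (b1, b2).1) ^+ 2 + ((a1 + 1, a2).2 - (b1, b2).2) ^+ 2) <= 4 * r ^+ 2 ->
  (1 + 4 * (b2 - d2) ^+ 2) * (50/183) ^+ 2 <= 4 * r ^+ 2.
Proof.
move=> G0 G1 G2 G3 G4 G5 G6 G7 G8 G9 G10 h1 h2; rewrite /= in h1 h2.
have L := LII11 (b1 - a1) (d1 - a1) (b2 - a2) (a2 - d2) G0 G1 G2 G3 G4 G5 G6 G7 G8 G9 G10; lra.
Qed.

Lemma CII21 {R : realType} (a1 a2 b1 b2 d1 d2 r : R) : 0 <= b2 - a2 -> 0 <= a2 - d2 -> 76/100 <= (b2 - a2) + (a2 - d2) -> (b2 - a2) + (a2 - d2) <= 1 -> 0 <= b1 - a1 -> b1 - a1 <= 1 -> 0 <= d1 - a1 -> d1 - a1 <= 1 -> (b1 - a1) - (d1 - a1) <= 65/100 -> (d1 - a1) - (b1 - a1) <= 65/100 -> ((b1 - a1) - (d1 - a1)) ^+ 2 + ((b2 - a2) + (a2 - d2)) ^+ 2 <= 1 ->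
  (((a1, a2).1 - (d1, d2).1) ^+ 2 + ((a1, a2).2 - (d1, d2).2) ^+ 2) <= 4 * r ^+ 2 -> (((b1, b2).1 - ((a1 + 1 + d1) / 2, (a2 + d2) / 2).1) ^+ 2 + ((b1, b2).2 - ((a1 + 1 + d1) / 2, (a2 + d2) / 2).2) ^+ 2) <= 4 * r ^+ 2 ->
  (1 + 4 * (b2 - d2) ^+ 2) * (50/183) ^+ 2 <= 4 * r ^+ 2.
Proof.
move=> G0 G1 G2 G3 G4 G5 G6 G7 G8 G9 G10 h1 h2; rewrite /= in h1 h2.
have L := LII21 (b1 - a1) (d1 - a1) (b2 - a2) (a2 - d2) G0 G1 G2 G3 G4 G5 G6 G7 G8 G9 G10; lra.
Qed.

Lemma CII22 {R : realType} (a1 a2 b1 b2 d1 d2 r : R) : 0 <= b2 - a2 -> 0 <= a2 - d2 -> 76/100 <= (b2 - a2) + (a2 - d2) -> (b2 - a2) + (a2 - d2) <= 1 -> 0 <= b1 - a1 -> b1 - a1 <= 1 -> 0 <= d1 - a1 -> d1 - a1 <= 1 -> (b1 - a1) - (d1 - a1) <= 65/100 -> (d1 - a1) - (b1 - a1) <= 65/100 -> ((b1 - a1) - (d1 - a1)) ^+ 2 + ((b2 - a2) + (a2 - d2)) ^+ 2 <= 1 ->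
  (((a1 + 1, a2).1 - ((a1 + d1) / 2, (a2 + d2) / 2).1) ^+ 2 + ((a1 + 1, a2).2 - ((a1 + d1) / 2, (a2 + d2) / 2).2) ^+ 2) <= 4 * r ^+ 2 -> (((b1, b2).1 - ((a1 + d1) / 2, (a2 + d2) / 2).1) ^+ 2 + ((b1, b2).2 - ((a1 + d1) / 2, (a2 + d2) / 2).2) ^+ 2) <= 4 * r ^+ 2 ->
  (1 + 4 * (b2 - d2) ^+ 2) * (50/183) ^+ 2 <= 4 * r ^+ 2.
Proof.
move=> G0 G1 G2 G3 G4 G5 G6 G7 G8 G9 G10 h1 h2; rewrite /= in h1 h2.
have L := LII22 (b1 - a1) (d1 - a1) (b2 - a2) (a2 - d2) G0 G1 G2 G3 G4 G5 G6 G7 G8 G9 G10; lra.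
Qed.

Lemma Cac {R : realType} (a1 a2 b2 d2 r : R) : 0 < b2 - d2 -> b2 - d2 <= 1 ->
  (((a1, a2).1 - (a1 + 1, a2).1) ^+ 2 + ((a1, a2).2 - (a1 + 1, a2).2) ^+ 2) <= 4 * r ^+ 2 ->
  (1 + 4 * (b2 - d2) ^+ 2) * (50/183) ^+ 2 <= 4 * r ^+ 2.
Proof. move=> h0 h1 h; rewrite /= in h; apply: fin_ac => //; lra. Qed.

Lemma Cbd {R : realType} (b1 b2 d1 d2 r : R) : 76/100 < b2 - d2 -> b2 - d2 <= 1 ->
  (((b1, b2).1 - (d1, d2).1) ^+ 2 + ((b1, b2).2 - (d1, d2).2) ^+ 2) <= 4 * r ^+ 2 ->
  (1 + 4 * (b2 - d2) ^+ 2) * (50/183) ^+ 2 <= 4 * r ^+ 2.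
Proof. move=> h0 h1 h; rewrite /= in h; exact: (fin_bd (b1 - d1)). Qed.

Lemma Cam {R : realType} (a1 a2 b2 d2 r : R) : 0 < b2 - d2 -> b2 - d2 <= 76/100 ->
  (((a1, a2).1 - ((a1 + (a1 + 1)) / 2, a2).1) ^+ 2 + ((a1, a2).2 - ((a1 + (a1 + 1)) / 2, a2).2) ^+ 2) <= 4 * r ^+ 2 ->
  (1 + 4 * (b2 - d2) ^+ 2) * (50/183) ^+ 2 <= 4 * r ^+ 2.
Proof. move=> h0 h1 h; rewrite /= in h; apply: fin_small => //; lra. Qed.

Lemma Cmc {R : realType} (a1 a2 b2 d2 r : R) : 0 < b2 - d2 -> b2 - d2 <= 76/100 ->
  ((((a1 + (a1 + 1)) / 2, a2).1 - (a1 + 1, a2).1) ^+ 2 + (((a1 + (a1 + 1)) / 2, a2).2 - (a1 + 1, a2).2) ^+ 2) <= 4 * r ^+ 2 ->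
  (1 + 4 * (b2 - d2) ^+ 2) * (50/183) ^+ 2 <= 4 * r ^+ 2.
Proof. move=> h0 h1 h; rewrite /= in h; apply: fin_small => //; lra. Qed.

Lemma Cac2 {R : realType} (a1 a2 b2 d2 r : R) : 0 < b2 - d2 -> b2 - d2 <= 76/100 ->
  (((a1, a2).1 - (a1 + 1, a2).1) ^+ 2 + ((a1, a2).2 - (a1 + 1, a2).2) ^+ 2) <= 4 * r ^+ 2 ->
  (1 + 4 * (b2 - d2) ^+ 2) * (50/183) ^+ 2 <= 4 * r ^+ 2.
Proof. move=> h0 h1 h; rewrite /= in h; apply: fin_small => //; lra. Qed.

Lemma ux {R : realType} (b1 d1 w : R) : 76/100 < w -> (b1 - d1) ^+ 2 + w ^+ 2 <= 1 ^+ 2 ->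
  b1 - d1 <= 65/100 /\ d1 - b1 <= 65/100.
Proof. by move=> h1 h2; split; nra. Qed.
Arguments Cam {R a1 a2 b2 d2 r}.
Arguments Cmc {R a1 a2 b2 d2 r}.
Arguments Cac2 {R a1 a2 b2 d2 r}.
Arguments Cac {R a1 a2 b2 d2 r}.
Arguments Cbd {R b1 b2 d1 d2 r}.
Arguments CI11 {R a1 a2 b1 b2 d1 d2 r}.
Arguments CI12 {R a1 a2 b1 b2 d1 d2 r}.
Arguments CI21 {R a1 a2 b1 b2 d1 d2 r}.
Arguments CI22 {R a1 a2 b1 b2 d1 d2 r}.
Arguments CII11 {R a1 a2 b1 b2 d1 d2 r}.
Arguments CII21 {R a1 a2 b1 b2 d1 d2 r}.
Arguments CII22 {R a1 a2 b1 b2 d1 d2 r}.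

Arguments quadP {R a b c d p} la lb lc ld.

Theorem lemma7 (R : realType) (a b c d : R * R) (W : R) :
  convex_quad_cw a b c d ->
  a.2 = c.2 ->
  dist a c = 1 ->
  diam (quad a b c d) = 1 ->
  bb_xmin (quad a b c d) = a.1 ->
  bb_ymax (quad a b c d) = b.2 ->
  bb_xmax (quad a b c d) = c.1 ->
  bb_ymin (quad a b c d) = d.2 ->
  bb_xmax (quad a b c d) - bb_xmin (quad a b c d) = 1 ->
  bb_ymax (quad a b c d) - bb_ymin (quad a b c d) = W ->
  0 < W -> W <= 1 ->
  Num.sqrt (1 + 4 * W ^+ 2) / 4 < (184%:R / 100%:R) * r_opt (quad a b c d).
Proof.
case: a => a1 a2; case: b => b1 b2; case: c => c1 c2; case: d => d1 d2.
move=> Hcv /= Hac2 _ Hdiam Hxmin Hymax Hxmax Hymin Hw1 HW W0 W1.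
rewrite Hxmax Hxmin in Hw1; rewrite Hymax Hymin in HW.
have Hc1 : c1 = a1 + 1 by lra.
subst c1 c2 W.
set Q := quad _ _ _ _.
case: Hcv => o1 o2 o3 o4; rewrite /orient /= in o1 o3.
have hb2 : a2 < b2 by lra.
have hd2 : d2 < a2 by lra.
have Ha : Q (a1, a2) by apply: (quadP 1 0 0 0); rewrite /=; lra.
have Hb : Q (b1, b2) by apply: (quadP 0 1 0 0); rewrite /=; lra.
have Hc : Q (a1 + 1, a2) by apply: (quadP 0 0 1 0); rewrite /=; lra.
have Hd : Q (d1, d2) by apply: (quadP 0 0 0 1); rewrite /=; lra.
have Hm : Q ((a1 + (a1 + 1)) / 2, a2) by apply: (quadP (1/2) 0 (1/2) 0); rewrite /=; lra.
have He : Q (((a1 + 1) + d1) / 2, (a2 + d2) / 2) by apply: (quadP 0 0 (1/2) (1/2)); rewrite /=; lra.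
have Hf : Q ((a1 + d1) / 2, (a2 + d2) / 2) by apply: (quadP (1/2) 0 0 (1/2)); rewrite /=; lra.
set M1 := `|a1| + `|b1| + `|a1 + 1| + `|d1|.
set M2 := `|a2| + `|b2| + `|a2| + `|d2|.
have QB : forall p, Q p -> `|p.1| <= M1 /\ `|p.2| <= M2 by move=> p hp; exact: quad_bound hp.
have M10 : 0 <= M1 by rewrite /M1; have := normr_ge0 a1; have := normr_ge0 b1; have := normr_ge0 (a1 + 1); have := normr_ge0 d1; lra.
have M20 : 0 <= M2 by rewrite /M2; have := normr_ge0 a2; have := normr_ge0 b2; have := normr_ge0 d2; lra.
have hlb : has_lbound [set p.1 | p in Q].
  exists (- M1) => x [p hp <-]; have [h1 _] := QB p hp; have := normb p.1; lra.
have hub : has_ubound [set p.1 | p in Q].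
  exists M1 => x [p hp <-]; have [h1 _] := QB p hp; have := normb p.1; lra.
have hb1 : a1 <= b1 by rewrite -Hxmin /bb_xmin; apply: (ge_inf hlb); exists (b1, b2).
have hd1 : a1 <= d1 by rewrite -Hxmin /bb_xmin; apply: (ge_inf hlb); exists (d1, d2).
have hb1' : b1 <= a1 + 1 by rewrite -Hxmax /bb_xmax; apply: (ub_le_sup hub); exists (b1, b2).
have hd1' : d1 <= a1 + 1 by rewrite -Hxmax /bb_xmax; apply: (ub_le_sup hub); exists (d1, d2).
have hubd : has_ubound [set e | exists p q, [/\ Q p, Q q & e = dist p q]].
  exists (2 * (M1 + M2)) => x [p [q [hp hq ->]]].
  apply: le_sqrt_of; first lra.
  have [h1 h2] := QB p hp; have [h3 h4] := QB q hq.
  exact: sq_box.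
have hbd : dist (b1, b2) (d1, d2) <= 1.
  by rewrite -Hdiam /diam; apply: (ub_le_sup hubd); exists (b1, b2), (d1, d2).
have hbd2 := dist2 hbd; rewrite /= in hbd2.

set C := [set r | two_disk_cover Q r].
have hne : C !=set0.
  exists (M1 + M2), (0, 0), (0, 0) => p hp; left; rewrite /cdisk /=.
  apply: le_sqrt_of; first lra.
  have [h1 h2] := QB p hp; exact: sq_box0.
have key : forall r, C r -> (1 + 4 * (b2 - d2) ^+ 2) * (50/183) ^+ 2 <= 4 * r ^+ 2 /\ 0 <= r.
  move=> r [z1 [z2 cov]].
  have r0 : 0 <= r.
    by case: (cov _ Ha) => h; apply: le_trans h; apply: dist_ge0.
  split => //.
  have W0' : 0 < b2 - d2 by lra.
  have [Wle|Wgt] := leP (b2 - d2) (76/100).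
    case: (cov _ Ha) => ha; [ case: (cov _ Hc) => hc; [ exact: (Cac2 W0' Wle (pair_bound ha hc)) | case: (cov _ Hm) => hm; [ exact: (Cam W0' Wle (pair_bound ha hm)) | exact: (Cmc W0' Wle (pair_bound hm hc)) ] ] | case: (cov _ Hc) => hc; [ case: (cov _ Hm) => hm; [ exact: (Cmc W0' Wle (pair_bound hm hc)) | exact: (Cam W0' Wle (pair_bound ha hm)) ] | exact: (Cac2 W0' Wle (pair_bound ha hc)) ] ].
  have [hx3 hx4] := ux b1 d1 (b2 - d2) Wgt hbd2.
  have G0 : 0 <= b2 - a2 by lra.
  have G1 : 0 <= a2 - d2 by lra.
  have G2 : 76/100 <= (b2 - a2) + (a2 - d2) by lra.
  have G3 : (b2 - a2) + (a2 - d2) <= 1 by lra.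
  have G4 : 0 <= b1 - a1 by lra.
  have G5 : b1 - a1 <= 1 by lra.
  have G6 : 0 <= d1 - a1 by lra.
  have G7 : d1 - a1 <= 1 by lra.
  have G8 : (b1 - a1) - (d1 - a1) <= 65/100 by lra.
  have G9 : (d1 - a1) - (b1 - a1) <= 65/100 by lra.
  have G10 : ((b1 - a1) - (d1 - a1)) ^+ 2 + ((b2 - a2) + (a2 - d2)) ^+ 2 <= 1.
    have -> : (b1 - a1) - (d1 - a1) = b1 - d1 by ring.
    have -> : (b2 - a2) + (a2 - d2) = b2 - d2 by ring.
    lra.
  case: (cov _ Ha) => ha; [ case: (cov _ Hc) => hc; [ exact: (Cac W0' W1 (pair_bound ha hc)) | case: (cov _ Hb) => hb; [ case: (cov _ Hd) => hd; [ exact: (Cbd Wgt W1 (pair_bound hb hd)) | case: (cov _ He) => he; [ case: (cov _ Hf) => hf; [ exact: (CI11 G0 G1 G2 G3 G4 G5 G6 G7 G8 G9 G10 (pair_bound ha he) (pair_bound hb he)) | exact: (CI11 G0 G1 G2 G3 G4 G5 G6 G7 G8 G9 G10 (pair_bound ha he) (pair_bound hb he)) ] | case: (cov _ Hf) => hf; [ exact: (CI21 G0 G1 G2 G3 G4 G5 G6 G7 G8 G9 G10 (pair_bound hb hf) (pair_bound hc hd)) | exact: (CI22 G0 G1 G2 G3 G4 G5 G6 G7 G8 G9 G10 (pair_bound ha hb) (pair_bound hc hf)) ] ] ] | case: (cov _ Hd) => hd; [ case: (cov _ He) => he; [ case: (cov _ Hf) => hf; [ exact: (CII11 G0 G1 G2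 G3 G4 G5 G6 G7 G8 G9 G10 (pair_bound ha he) (pair_bound hc hb)) | exact: (CI12 G0 G1 G2 G3 G4 G5 G6 G7 G8 G9 G10 (pair_bound ha he) (pair_bound hc hf)) ] | case: (cov _ Hf) => hf; [ exact: (CII21 G0 G1 G2 G3 G4 G5 G6 G7 G8 G9 G10 (pair_bound ha hd) (pair_bound hb he)) | exact: (CII21 G0 G1 G2 G3 G4 G5 G6 G7 G8 G9 G10 (pair_bound ha hd) (pair_bound hb he)) ] ] | exact: (Cbd Wgt W1 (pair_bound hb hd)) ] ] ] | case: (cov _ Hc) => hc; [ case: (cov _ Hb) => hb; [ case: (cov _ Hd) => hd; [ exact: (Cbd Wgt W1 (pair_bound hb hd)) | case: (cov _ He) => he; [ case: (cov _ Hf) => hf; [ exact: (CII21 G0 G1 G2 G3 G4 G5 G6 G7 G8 G9 G10 (pair_bound ha hd) (pair_bound hb he)) | exact: (CII21 G0 G1 G2 G3 G4 G5 G6 G7 G8 G9 G10 (pair_bound ha hd) (pair_bound hb he)) ] | case: (cov _ Hf) => hf; [ exact: (CI12 G0 G1 G2 G3 G4 G5 G6 G7 G8 G9 G10 (pair_bound ha he) (pair_bound hc hf)) | exact: (CII11 G0 G1 G2 G3 G4 G5 G6 G7 G8 G9 G10 (pair_bound ha he) (pair_bound hc hb)) ] ] ] | case: (cov _ Hd) => hd; [ case: (cov _ He) => he; [ case: (cov _ Hf) => hf; [ exact: (CI22 G0 G1 G2 G3 G4 G5 G6 G7 G8 G9 G10 (pair_bound ha hb) (pair_bound hc hf)) |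 exact: (CI21 G0 G1 G2 G3 G4 G5 G6 G7 G8 G9 G10 (pair_bound hb hf) (pair_bound hc hd)) ] | case: (cov _ Hf) => hf; [ exact: (CI11 G0 G1 G2 G3 G4 G5 G6 G7 G8 G9 G10 (pair_bound ha he) (pair_bound hb he)) | exact: (CI11 G0 G1 G2 G3 G4 G5 G6 G7 G8 G9 G10 (pair_bound ha he) (pair_bound hb he)) ] ] | exact: (Cbd Wgt W1 (pair_bound hb hd)) ] ] | exact: (Cac W0' W1 (pair_bound ha hc)) ] ].
have hL : lbound C (Num.sqrt (1 + 4 * (b2 - d2) ^+ 2) * (25/183)).
  move=> r /key [h1 h2].
  have s0 : 0 <= 1 + 4 * (b2 - d2) ^+ 2 by have := sqr_ge0 (b2 - d2); lra.
  have e := sqr_sqrtr s0; have q0 := sqrtr_ge0 (1 + 4 * (b2 - d2) ^+ 2).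
  set s := Num.sqrt _ in e q0 *.
  nra.
have := lb_le_inf hne hL.
rewrite /r_opt -/C.
have s1 : 0 < Num.sqrt (1 + 4 * (b2 - d2) ^+ 2) by rewrite sqrtr_gt0; have := sqr_ge0 (b2 - d2); lra.
set s := Num.sqrt _ in s1 *.
move=> h.
lra.
Qed.
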